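(* Let $n\ge 25$ and let $S_n$ be the star graph with vertices $a_1,\dots,a_n$ and center $a_1$. Then $$\lim_{p\to\infty}\|M_{S_n}\|_p^p=\frac{1+\sqrt{n}}{2}.$$
   Context: For a finite connected graph $G=(V,E)$ with graph distance $d_G$ and $f:V\to\mathbb{R}$, $M_Gf(v)=\sup_{r\geq 0}\frac{1}{|B(v,r)|}\sum_{u\in B(v,r)}|f(u)|$, where $B(v,r)=\{u\in V: d_G(u,v)\le r\}$. For $g:V\to\mathbb{R}$, $\|g\|_p=(\sum_{v\in V}|g(v)|^p)^{1/p}$ and $\|M_G\|_p=\sup_{f\neq 0}\|M_Gf\|_p/\|f\|_p$. The star graph $S_n$ has vertices $a_1,\dots,a_n$ and edges exactly between $a_1$ and each $a_i$, $i\ge 2$. *)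

(* Defs.v *)
From HB Require Import structures.
From mathcomp Require Import all_boot all_order all_algebra.
From mathcomp Require Import all_classical all_reals all_analysis.
Set Implicit Arguments. Unset Strict Implicit. Unset Printing Implicit Defensive.
Import Order.TTheory GRing.Theory Num.Theory.
Import numFieldNormedType.Exports.
Local Open Scope classical_set_scope.
Local Open Scope ring_scope.

(* [walkball e v k] = vertices reachable from v by a walk of length <= k,
   i.e. the vertices u with graph distance d(u,v) <= k. *)
Fixpoint walkball (T : finType) (e : rel T) (v : T) (k : nat) : {set T} :=
  match k with
  | 0 => [set v]
  | k'.+1 => walkball e v k' :|: [set u | [exists w in walkball e v k', e w u]]
  end.

Definition gball (T : finType) (e : rel T) (v : T) {R : realType} (r : R) : set T :=
  [set u | exists k : nat, (k%:R <= r) /\ u \in walkball e v k].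

Definition ball_avg (T : finType) (e : rel T) {R : realType}
  (f : T -> R) (v : T) (r : R) : R :=
  (#|[set u | `[< gball e v r u >]]|%:R)^-1 *
  \sum_(u in [set u | `[< gball e v r u >]]) `|f u|.

Definition maxfun (T : finType) (e : rel T) {R : realType}
  (f : T -> R) (v : T) : R :=
  sup [set ball_avg e f v r | r in [set r : R | 0 <= r]].

Definition lpnorm (T : finType) {R : realType} (p : R) (g : T -> R) : R :=
  (\sum_(v : T) `|g v| `^ p) `^ (p^-1).

Definition maxop_norm (T : finType) (e : rel T) {R : realType} (p : R) : R :=
  sup [set lpnorm p (maxfun e f) / lpnorm p f
      | f in [set f : T -> R | exists v, f v != 0]].

(* Star graph S_n on vertices 'I_n (a_{i+1} <-> i), center a_1 <-> 0. *)
Definition star_adj (n : nat) : rel 'I_n :=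
  fun i j => (i != j) && ((val i == 0%N) || (val j == 0%N)).

(* Main.v *)
Require Import Defs.
From HB Require Import structures.
From mathcomp Require Import all_boot all_order all_algebra.
From mathcomp Require Import all_classical all_reals all_analysis.
From mathcomp Require Import ring lra.
Import Order.TTheory GRing.Theory Num.Theory.
Import numFieldNormedType.Exports.
Local Open Scope ring_scope.
Section S.
Variable R : realType.
Implicit Types x p : R.

Lemma sqrt_powR x p : 0 <= x -> x `^ (p / 2) = Num.sqrt (x `^ p).
Proof. by move=> x0; rewrite powRrM powR12_sqrt // powR_ge0. Qed.

Lemma case1 (eta p x L : R) : 0 < eta -> 0 < p -> 0 < L ->
  2 * L <= p -> L ^+ 2 <= 4 * p * ln (1 + eta) ->
  0 < x -> x <= 1 -> expR (- L) <= x `^ p ->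
  ((1 + x) / 2) `^ p <= (1 + eta) * Num.sqrt (x `^ p).
Proof.
move=> e0 p0 L0 pL pe x0 x1 hx.
have h1 : - L <= p * ln x.
  by rewrite -ln_powR -(expRK (- L)) ler_ln ?posrE ?expR_gt0 ?powR_gt0.
have h2 : ln x <= x - 1.
  have := @le_ln1Dx _ (x - 1); rewrite addrCA subrr addr0; apply; lra.
have h3 : p * (1 - x) <= L by nra.
have hx2 : 1 / 2 <= x by nra.
set z := (1 - x) ^+ 2 / (4 * x).
have hz : z * p / 2 <= ln (1 + eta).
  have : p ^+ 2 * (1 - x) ^+ 2 <= L ^+ 2.
    have hq : 0 <= p * (1 - x) by nra.
    rewrite -exprMn !expr2; nra.
  move=> hh; rewrite /z.
  have -> : (1 - x) ^+ 2 / (4 * x) * p / 2 = (p ^+ 2 * (1 - x) ^+ 2) / (8 * x * p).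
    by field; apply/andP; split; lra.
  rewrite ler_pdivrMr; last nra.
  have : 0 <= ln (1 + eta) by rewrite ln_ge0 //; lra.
  nra.
have hsq : ((1 + x) / 2) ^+ 2 <= x * expR z.
  have -> : ((1 + x) / 2) ^+ 2 = x * (1 + z) by rewrite /z; field; lra.
  by rewrite ler_pM2l // expR_ge1Dx.
have -> : ((1 + x) / 2) `^ p = (((1 + x) / 2) ^+ 2) `^ (p / 2).
  by rewrite -powR_mulrn; [rewrite -powRrM; congr (_ `^ _); field | lra].
rewrite -sqrt_powR; last lra.
apply: (le_trans (ge0_ler_powR _ _ _ hsq)); rewrite ?nnegrE; first lra.
- by apply: sqr_ge0.
- by apply: mulr_ge0; [lra| exact: expR_ge0].
have x0' : 0 <= x by lra.
rewrite powRM ?expR_ge0 //.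
rewrite mulrC ler_wpM2r ?powR_ge0 // -expRM.
rewrite -(@lnK _ (1 + eta)) ?posrE; last lra.
by rewrite ler_expR mulrA.
Qed.
Lemma asym (eta : R) : 0 < eta -> eta <= 1 -> exists p0 : R, 0 < p0 /\
  forall p x, p0 <= p -> 0 <= x -> x <= 1 ->
  ((1 + x) / 2) `^ p <= (1 + eta) * Num.sqrt (x `^ p) + eta.
Proof.
move=> e0 e1.
set t0 := (eta / 2) ^+ 2.
have t00 : 0 < t0 by rewrite /t0 exprn_gt0 //; lra.
have t01 : t0 < 1 by rewrite /t0 expr2; nra.
set L := - ln t0.
have L0 : 0 < L by rewrite /L oppr_gt0 ln_lt0 // t00 t01.
have eL : expR (- L) = t0 by rewrite /L opprK lnK.
have le0 : 0 < ln (1 + eta) by rewrite ln_gt0 //; lra.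
exists (2 * L + L ^+ 2 / (4 * ln (1 + eta)) + 1); split.
  have : 0 <= L ^+ 2 / (4 * ln (1 + eta)) by apply: divr_ge0; [exact: sqr_ge0| lra].
  lra.
move=> p x hp x0 x1.
have hL2 : 0 <= L ^+ 2 / (4 * ln (1 + eta)) by apply: divr_ge0; [exact: sqr_ge0| lra].
have p0 : 0 < p by lra.
have pL : 2 * L <= p by lra.
have pe : L ^+ 2 <= 4 * p * ln (1 + eta).
  have : L ^+ 2 / (4 * ln (1 + eta)) <= p by lra.
  rewrite ler_pdivrMr; lra.
have key : forall y, 0 < y -> y <= 1 -> t0 <= y `^ p ->
    ((1 + y) / 2) `^ p <= (1 + eta) * Num.sqrt (y `^ p).
  by move=> y y0 y1 hy; apply: (@case1 eta p y L e0 p0 L0 pL pe y0 y1); rewrite eL.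
have sq0 : 0 <= Num.sqrt (x `^ p) by exact: sqrtr_ge0.
case: (lerP t0 (x `^ p)) => hx.
  have xpos : 0 < x.
    rewrite lt_neqAle x0 andbT; apply/eqP => ex; move: hx; rewrite -ex powR0 ?gt_eqF //.
    lra.
  have := key x xpos x1 hx; lra.
set x1' := t0 `^ (p ^-1).
have x1p : x1' `^ p = t0 by rewrite /x1' -powRrM mulVf ?gt_eqF // powRr1 //; lra.
have x1pos : 0 < x1' by rewrite powR_gt0.
have x1le : x1' <= 1.
  have h11 : (1:R) `^ p^-1 = 1 by rewrite powR1.
  rewrite /x1' -h11; apply: ge0_ler_powR; rewrite ?nnegrE; try lra.
  by rewrite invr_ge0; lra.
have xx1 : x <= x1'.
  rewrite leNgt; apply/negP => hlt.
  have := gt0_ltr_powR p0 (_ : x1' \in Num.nneg) (_ : x \in Num.nneg) hlt.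
  rewrite x1p !nnegrE => /(_ (ltW x1pos) x0); lra.
have h1 : ((1 + x) / 2) `^ p <= ((1 + x1') / 2) `^ p.
  apply: ge0_ler_powR; rewrite ?nnegrE; lra.
have hk : t0 <= x1' `^ p by rewrite x1p.
have := key x1' x1pos x1le hk.
rewrite x1p /t0 sqrtr_sqr ger0_norm; last lra.
have : 0 <= (1 + eta) * Num.sqrt (x `^ p) by apply: mulr_ge0 => //; lra.
nra.
Qed.
Lemma leaf_bound (eta p K2 a x : R) : 0 <= eta -> 1 <= K2 -> 0 < p ->
  (forall z, 0 <= z -> z <= 1 -> ((1 + z) / 2) `^ p <= (1 + eta) * Num.sqrt (z `^ p) + eta) ->
  0 <= a -> 0 <= x ->
  (Num.max x ((x + a) / 2)) `^ p <= ((1 + eta) ^+ 2 / (4 * K2) + eta) * a `^ p + K2 * x `^ p.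
Proof.
move=> e0 K1 p0 H a0 x0.
have c0 : 0 <= (1 + eta) ^+ 2 / (4 * K2) + eta.
  apply: addr_ge0 => //; apply: divr_ge0; [exact: sqr_ge0| lra].
case: (lerP a x) => ax.
  have -> : Num.max x ((x + a) / 2) = x by apply/max_idPl; lra.
  have := powR_ge0 a p; have := powR_ge0 x p; nra.
have -> : Num.max x ((x + a) / 2) = (x + a) / 2 by apply/max_idPr; lra.
have apos : 0 < a by lra.
set z := x / a.
have z0 : 0 <= z by rewrite /z divr_ge0.
have z1 : z <= 1 by rewrite /z ler_pdivrMr // mul1r; lra.
have -> : (x + a) / 2 = a * ((1 + z) / 2) by rewrite /z; field; lra.
rewrite powRM //; last lra.
have hx : x = a * z by rewrite /z; field; lra.
have hv : x `^ p = a `^ p * z `^ p by rewrite hx powRM.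
have u0 : 0 <= a `^ p by exact: powR_ge0.
have [U [hU U0]] : exists U, U ^+ 2 = a `^ p /\ 0 <= U.
  by exists (Num.sqrt (a `^ p)); split; [rewrite sqr_sqrtr | exact: sqrtr_ge0].
have [s [hs [s0 hs']]] : exists s, s ^+ 2 = z `^ p /\ 0 <= s /\ s = Num.sqrt (z `^ p).
  exists (Num.sqrt (z `^ p)); split; first by rewrite sqr_sqrtr ?powR_ge0.
  by split; [exact: sqrtr_ge0|].
apply: (le_trans (ler_wpM2l u0 (H z z0 z1))).
rewrite hv -hs' -hs -hU.
have key : (1 + eta) * (U * (U * s)) <= (1 + eta) ^+ 2 / (4 * K2) * U ^+ 2 + K2 * (U ^+ 2 * s ^+ 2).
  have h4 : 0 < 4 * K2 by lra.
  rewrite -(ler_pM2l h4).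
  have -> : 4 * K2 * ((1 + eta) ^+ 2 / (4 * K2) * U ^+ 2 + K2 * (U ^+ 2 * s ^+ 2))
     = (1 + eta) ^+ 2 * U ^+ 2 + 4 * K2 ^+ 2 * (U ^+ 2 * s ^+ 2) by field; lra.
  have := sqr_ge0 ((1 + eta) * U - 2 * K2 * (U * s)).
  rewrite !expr2; nra.
have -> : U ^+ 2 * ((1 + eta) * s + eta) = (1 + eta) * (U * (U * s)) + eta * U ^+ 2 by ring.
have -> : ((1 + eta) ^+ 2 / (4 * K2) + eta) * U ^+ 2 + K2 * (U ^+ 2 * s ^+ 2)
  = (1 + eta) ^+ 2 / (4 * K2) * U ^+ 2 + K2 * (U ^+ 2 * s ^+ 2) + eta * U ^+ 2 by ring.
lra.
Qed.
Lemma powR_conv2 (p t x y : R) : 1 <= p -> 0 <= t -> t <= 1 -> 0 <= x -> 0 <= y ->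
  (t * x + (1 - t) * y) `^ p <= t * x `^ p + (1 - t) * y `^ p.
Proof.
move=> p1 t0 t1 x0 y0.
have := @convex_powR R p p1 (Itv01 t0 t1) x y.
rewrite !inE /= !in_itv /= !andbT => /(_ x0 y0).
by [].
Qed.

Lemma jensen_seq (I : Type) (s : seq I) (y : I -> R) (p : R) : 1 <= p ->
  (forall i, 0 <= y i) -> (0 < size s)%N ->
  ((\sum_(i <- s) y i) / (size s)%:R) `^ p <= (\sum_(i <- s) (y i) `^ p) / (size s)%:R.
Proof.
move=> p1 y0; elim: s => [//|i s IH] _.
case: (posnP (size s)) => [/size0nil -> | hs].
  by rewrite /= !big_cons !big_nil !addr0 divr1 divr1.
move: IH => /(_ hs) IH.
rewrite !big_cons.
set S := \sum_(i <- s) y i.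
set P := \sum_(i <- s) y i `^ p.
have k0 : 0 < (size s)%:R :> R by rewrite ltr0n.
set k := (size s)%:R : R in k0 IH *.
have -> : (size (i :: s))%:R = k + 1 by rewrite /k /= -addn1 natrD.
have S0 : 0 <= S by rewrite /S sumr_ge0.
have -> : (y i + S) / (k + 1) = (k + 1)^-1 * y i + (1 - (k + 1)^-1) * (S / k).
  by field; apply/andP; split; lra.
apply: (le_trans (@powR_conv2 p _ _ _ p1 _ _ _ _)) => //.
- by rewrite invr_ge0; lra.
- by rewrite invf_le1; lra.
- by rewrite divr_ge0 //; lra.
have h1 : 0 <= 1 - (k + 1)^-1 by rewrite subr_ge0 invf_le1; lra.
apply: (le_trans (lerD (lexx _) (ler_wpM2l h1 IH))).
rewrite le_eqVlt; apply/orP; left; apply/eqP.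
rewrite -/P; field; apply/andP; split; lra.
Qed.

Lemma jensen_fin (T : finType) (y : T -> R) (p : R) : 1 <= p ->
  (forall i, 0 <= y i) -> (0 < #|T|)%N ->
  ((\sum_i y i) / #|T|%:R) `^ p <= (\sum_i (y i) `^ p) / #|T|%:R.
Proof.
move=> p1 y0 T0.
have hs : #|T| = size (index_enum T) by rewrite cardT enumT [index_enum T]unlock.
rewrite hs; apply: jensen_seq => //.
by rewrite -hs.
Qed.
Lemma scalar_ineq (Nr kr w eps : R) : 25 <= Nr -> 0 <= kr -> kr <= Nr - 1 -> 0 <= w ->
  w ^+ 2 = Nr -> 0 < eps -> eps <= 1 / 2 ->
  1 + kr / Nr + (Nr - 1 - kr) * ((1 + eps / (2 * Nr)) ^+ 2 / (4 * ((1 + w) / 2 + eps - kr / Nr))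
     + eps / (2 * Nr)) <= (1 + w) / 2 + eps.
Proof.
move=> N25 k0 kN w0 wN e0 e1.
have w5 : 5 <= w by nra.
have Npos : 0 < Nr by lra.
set d := kr / Nr.
have d0 : 0 <= d by rewrite /d divr_ge0 //; lra.
have d1 : d <= 1 by rewrite /d ler_pdivrMr //; lra.
have kd : kr = d * Nr by rewrite /d; field; lra.
clearbody d.
set eta := eps / (2 * Nr).
have eta0 : 0 < eta by rewrite /eta divr_gt0 //; lra.
have etaN : eta * Nr = eps / 2 by rewrite /eta; field; lra.
have eta1 : eta <= 1 by rewrite /eta ler_pdivrMr; lra.
clearbody eta.
set K := (1 + w) / 2 + eps.
have KE : K = (1 + w) / 2 + eps by [].
clearbody K.
set K' := K - d.
have K'E : K' = K - d by [].
clearbody K'.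
have K'2 : 2 <= K' by rewrite K'E KE; lra.
set j := Nr - 1 - kr.
have jE : j = Nr - 1 - kr by [].
clearbody j.
have j0 : 0 <= j by rewrite jE; lra.
have jN : j <= Nr by rewrite jE; lra.
have E : j * ((1 + eta) ^+ 2 / (4 * K') + eta) = (j * (1 + eta) ^+ 2 + 4 * K' * j * eta) / (4 * K').
  by field; lra.
suff : j * (1 + eta) ^+ 2 + 4 * K' * j * eta <= 4 * K' * (K' - 1).
  move=> h.
  have : j * ((1 + eta) ^+ 2 / (4 * K') + eta) <= K' - 1.
    rewrite E ler_pdivrMr; last lra.
    lra.
  rewrite K'E; lra.
have h1 : j * (1 + eta) ^+ 2 <= j * (1 + 3 * eta).
  apply: ler_wpM2l => //; rewrite expr2; nra.
have h2 : 4 * K' * j * eta <= 4 * K * Nr * eta.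
  have : K' <= K by rewrite K'E; lra.
  have : 0 <= K' by lra.
  move=> a b; have : K' * j <= K * Nr by nra.
  nra.
have h3 : j * (1 + 3 * eta) <= j + 3 * (eps / 2) by nra.
have h4 : 4 * K * Nr * eta = 2 * K * eps.
  have -> : 4 * K * Nr * eta = 4 * K * (eta * Nr) by ring.
  by rewrite etaN; field.
have h5 : 0 <= d * (w ^+ 2 - 4 * w - 8 * eps) by apply: mulr_ge0 => //; nra.
have h6 : 0 <= eps * (3 * w - 5 / 2) by apply: mulr_ge0; lra.
have h7 : 0 <= d ^+ 2 by exact: sqr_ge0.
have h8 : 0 <= eps ^+ 2 by exact: sqr_ge0.
have hj : j = w ^+ 2 - 1 - d * w ^+ 2 by rewrite jE kd wN.
have Eq : 4 * K' * (K' - 1) - (j + 3 * (eps / 2) + 2 * K * eps) =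
   2 * eps ^+ 2 + 4 * d ^+ 2 + eps * (3 * w - 5 / 2) + d * (w ^+ 2 - 4 * w - 8 * eps).
  by rewrite hj K'E KE; field.
lra.
Qed.
Lemma maxr_r {a b : R} : a <= b -> Num.max a b = b. Proof. by move/max_idPr. Qed.
Lemma maxr_l {a b : R} : b <= a -> Num.max a b = a. Proof. by move/max_idPl. Qed.

Lemma powR_max (a b p : R) : 0 <= a -> 0 <= b -> 0 <= p ->
  (Num.max a b) `^ p = Num.max (a `^ p) (b `^ p).
Proof.
move=> a0 b0 p0; case: (lerP a b) => ab.
  rewrite ?(maxr_r ab); apply/esym/max_idPr.
  by apply: ge0_ler_powR; rewrite ?nnegrE.
rewrite ?(maxr_l (ltW ab)); apply/esym/max_idPl.
by apply: ge0_ler_powR; rewrite ?nnegrE // ltW.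
Qed.

Lemma powR_mono (a b p : R) : 0 <= a -> a <= b -> 0 <= p -> a `^ p <= b `^ p.
Proof. move=> a0 ab p0; apply: ge0_ler_powR; rewrite ?nnegrE //; exact: le_trans ab. Qed.

Lemma main_ineq (n : nat) (y : 'I_n.+1 -> R) (p eps w : R) :
  (25 <= n.+1)%N -> 1 <= p -> 0 < eps -> eps <= 1 / 2 -> 0 <= w -> w ^+ 2 = n.+1%:R ->
  (forall z, 0 <= z -> z <= 1 ->
     ((1 + z) / 2) `^ p <= (1 + eps / (2 * n.+1%:R)) * Num.sqrt (z `^ p) + eps / (2 * n.+1%:R)) ->
  (forall u, 0 <= y u) ->
  (Num.max (y ord0) ((n.+1%:R)^-1 * \sum_u y u)) `^ p +
  \sum_(i < n) (Num.max (y (lift ord0 i))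
        (Num.max ((y (lift ord0 i) + y ord0) / 2) ((n.+1%:R)^-1 * \sum_u y u))) `^ p
   <= ((1 + w) / 2 + eps) * \sum_u (y u) `^ p.
Proof.
move=> n25 p1 e0 e1 w0 wN H y0.
have Npos : 0 < n.+1%:R :> R by rewrite ltr0n.
have N25 : 25 <= n.+1%:R :> R by rewrite (ler_nat R 25 n.+1).
have w5 : 5 <= w by nra.
set N := n.+1%:R in Npos N25 wN H *.
set A := N^-1 * \sum_u y u.
set K := (1 + w) / 2 + eps.
have K3 : 3 <= K by rewrite /K; lra.
have p0 : 0 <= p by lra.
have A0 : 0 <= A by rewrite /A mulr_ge0 ?invr_ge0 ?sumr_ge0 //; lra.
set a := y ord0.
have a0 : 0 <= a := y0 ord0.
set P := A `^ p.
have P0 : 0 <= P by exact: powR_ge0.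
set D := \sum_u (y u) `^ p.
have D0 : 0 <= D by rewrite /D sumr_ge0 // => u _; exact: powR_ge0.
have hP : P <= D / N.
  have hc : (0 < #|'I_n.+1|)%N by rewrite card_ord.
  have := @jensen_fin _ y p p1 y0 hc.
  by rewrite card_ord -/N /P /A mulrC.
have hD : D = a `^ p + \sum_(i < n) (y (lift ord0 i)) `^ p by rewrite /D big_ord_recl.
set Sx := \sum_(i < n) (y (lift ord0 i)) `^ p in hD.
have nN : n%:R = N - 1 by rewrite /N -addn1 natrD addrK.
have SxD : a `^ p + Sx = D by rewrite hD.
have Sx0 : 0 <= Sx by rewrite /Sx sumr_ge0 // => i _; exact: powR_ge0.
have ap0 : 0 <= a `^ p by exact: powR_ge0.
have NP : N * P <= D by move: hP; rewrite ler_pdivlMr // mulrC.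
case: (lerP A a) => hAa; last first.
  have c1 : (Num.max a A) `^ p <= a `^ p + P.
    rewrite powR_max //; case: (lerP (a `^ p) P) => h.
      by rewrite ?(maxr_r h); lra.
    by rewrite ?(maxr_l (ltW h)); lra.
  have c2 : \sum_(i < n) (Num.max (y (lift ord0 i))
        (Num.max ((y (lift ord0 i) + a) / 2) A)) `^ p <= \sum_(i < n) ((y (lift ord0 i)) `^ p + P).
    apply: ler_sum => i _.
    set x := y (lift ord0 i).
    have x0 : 0 <= x := y0 _.
    have hm : (x + a) / 2 <= Num.max x A.
      by case: (lerP x A) => h; [rewrite ?(maxr_r h) | rewrite ?(maxr_l (ltW h))]; lra.
    have hm2 : Num.max x (Num.max ((x + a) / 2) A) <= Num.max x A.
      by rewrite !ge_max le_max lexx hm /= le_max lexx orbT.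
    have hm0 : 0 <= Num.max x (Num.max ((x + a) / 2) A) by rewrite le_max x0.
    apply: (le_trans (@powR_mono _ _ p hm0 hm2 p0)).
    rewrite powR_max //; case: (lerP (x `^ p) P) => h.
      by rewrite ?(maxr_r h); have := powR_ge0 x p; lra.
    by rewrite ?(maxr_l (ltW h)); lra.
  have c3 : \sum_(i < n) ((y (lift ord0 i)) `^ p + P) = Sx + P * n%:R.
    by rewrite big_split /= sumr_const card_ord mulr_natr.
  rewrite c3 in c2.
  have : P * n%:R <= D by rewrite nN; nra.
  have : D <= K * D - D by nra.
  rewrite -/P; lra.
rewrite ?(maxr_l hAa).
set L := fun i : 'I_n => Num.max (y (lift ord0 i)) ((y (lift ord0 i) + a) / 2).
have L0 : forall i, 0 <= L i by move=> i; rewrite /L le_max y0.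
have E1 : \sum_(i < n) (Num.max (y (lift ord0 i))
        (Num.max ((y (lift ord0 i) + a) / 2) A)) `^ p = \sum_(i < n) Num.max (L i `^ p) P.
  apply: eq_bigr => i _; rewrite maxA powR_max //; by rewrite le_max y0.
rewrite E1.
pose B := fun i => L i `^ p < P.
rewrite (bigID B) /=.
have E2 : \sum_(i < n | B i) Num.max (L i `^ p) P = P * \sum_(i < n | B i) 1.
  rewrite mulr_sumr; apply: eq_bigr => i hi; rewrite mulr1; exact: maxr_r (ltW hi).
have E3 : \sum_(i < n | ~~ B i) Num.max (L i `^ p) P = \sum_(i < n | ~~ B i) L i `^ p.
  by apply: eq_bigr => i hi; apply: maxr_l; rewrite leNgt.
rewrite E2 E3.
set kr := \sum_(i < n | B i) (1 : R).
set jr := \sum_(i < n | ~~ B i) (1 : R).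
have kj : kr + jr = n%:R.
  have -> : n%:R = \sum_(i < n) (1:R) :> R by rewrite sumr_const card_ord.
  by rewrite (bigID B).
have kr0 : 0 <= kr by rewrite /kr sumr_ge0.
have jr0 : 0 <= jr by rewrite /jr sumr_ge0.
set SB := \sum_(i < n | B i) (y (lift ord0 i)) `^ p.
set SU := \sum_(i < n | ~~ B i) (y (lift ord0 i)) `^ p.
have SBU : Sx = SB + SU by rewrite /Sx (bigID B).
have SB0 : 0 <= SB by rewrite /SB sumr_ge0 // => i _; exact: powR_ge0.
have SU0 : 0 <= SU by rewrite /SU sumr_ge0 // => i _; exact: powR_ge0.
set eta := eps / (2 * N).
have eta0 : 0 <= eta by rewrite /eta divr_ge0 //; lra.
set c := kr / N.
have c0 : 0 <= c by rewrite /c divr_ge0 //; lra.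
have c1 : c <= 1 by rewrite /c ler_pdivrMr //; lra.
set K2 := K - c.
have K21 : 1 <= K2 by rewrite /K2; lra.
set beta := (1 + eta) ^+ 2 / (4 * K2) + eta.
have hU : \sum_(i < n | ~~ B i) L i `^ p <= beta * a `^ p * jr + K2 * SU.
  have -> : beta * a `^ p * jr + K2 * SU =
     \sum_(i < n | ~~ B i) (beta * a `^ p + K2 * (y (lift ord0 i)) `^ p).
    rewrite big_split /=.
    have -> : \sum_(i < n | ~~ B i) beta * a `^ p = beta * a `^ p * jr.
      by rewrite /jr mulr_sumr; apply: eq_bigr => i _; rewrite mulr1.
    by congr (_ + _); rewrite /SU mulr_sumr.
  apply: ler_sum => i _.
  by apply: (@leaf_bound eta p K2 a (y (lift ord0 i)) eta0 K21 _ H a0 (y0 _)); lra.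
have krN : kr <= N - 1 by rewrite -nN -kj; lra.
have sc := @scalar_ineq N kr w eps N25 kr0 krN w0 wN e0 e1.
rewrite -/eta -/c -/K -/K2 -/beta in sc.
have jrE : jr = N - 1 - kr by rewrite -nN -kj; ring.
rewrite -jrE in sc.
have f1 : P * kr <= c * D.
  rewrite /c mulrC mulrAC -mulrA.
  by apply: ler_wpM2l => //; rewrite mulrC.
have f2 : a `^ p * (1 + c + jr * beta) <= a `^ p * K by apply: ler_wpM2l.
have f3 : c * SB <= K * SB by apply: ler_wpM2r => //; lra.
have DE : D = a `^ p + SB + SU by rewrite -SxD SBU addrA.
have K2E : K2 = K - c by [].
rewrite DE in f1 *.
rewrite K2E in hU.
have e4 : a `^ p * (1 + c + jr * beta) = a `^ p + c * a `^ p + beta * a `^ p * jr by ring.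
have e5 : c * (a `^ p + SB + SU) = c * a `^ p + c * SB + c * SU by ring.
have e6 : (K - c) * SU = K * SU - c * SU by ring.
have e7 : K * (a `^ p + SB + SU) = a `^ p * K + K * SB + K * SU by ring.
rewrite e7.
lra.
Qed.
End S.
Set Implicit Arguments. Unset Strict Implicit. Unset Printing Implicit Defensive.
Section Star.
Variable R : realType.

Definition avgW (T : finType) (e : rel T) (f : T -> R) (v : T) (k : nat) : R :=
  (#|walkball e v k|%:R)^-1 * \sum_(u in walkball e v k) `|f u|.

Lemma wb_mono (T : finType) (e : rel T) v k k' : (k <= k')%N ->
  walkball e v k \subset walkball e v k'.
Proof.
elim: k' => [|k' IH]; first by rewrite leqn0 => /eqP ->.
rewrite leq_eqVlt => /orP [/eqP -> //| hk].
apply: (fintype.subset_trans (IH hk)); exact: finset.subsetUl.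
Qed.

Lemma gball_mem (T : finType) (e : rel T) v (r : R) u : 0 <= r ->
  (u \in [set u | `[< gball e v r u >]]%classic) = (u \in walkball e v (Num.truncn r)).
Proof.
move=> r0; have /andP [h1 h2] := truncn_itv r0.
apply/idP/idP.
  move/set_mem => /= /asboolP [k [hk hu]].
  have : (k%:R < (Num.truncn r).+1%:R :> R) by apply: (le_lt_trans hk).
  rewrite ltr_nat ltnS => hk'.
  exact: (fintype.subsetP (@wb_mono T e v _ _ hk')).
by move=> hu; apply: mem_set; apply/asboolP; exists (Num.truncn r).
Qed.

Lemma ball_avgE (T : finType) (e : rel T) (f : T -> R) v (r : R) : 0 <= r ->
  ball_avg e f v r = avgW e f v (Num.truncn r).
Proof.
move=> r0; rewrite /ball_avg /avgW.
rewrite (eq_card (fun u => @gball_mem T e v r u r0)).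
by rewrite (eq_bigl _ _ (fun u => @gball_mem T e v r u r0)).
Qed.

Lemma maxfun_eq (T : finType) (e : rel T) (f : T -> R) v :
  maxfun e f v = sup [set avgW e f v k | k in [set: nat]]%classic.
Proof.
rewrite /maxfun; congr sup; apply/seteqP; split => x /=.
  move=> [r hr <-]; exists (Num.truncn r) => //.
  by rewrite ball_avgE.
move=> [k _ <-]; exists k%:R; first by rewrite /= ler0n.
by rewrite ball_avgE ?ler0n // natrK.
Qed.

End Star.
Section Star2.
Variable R : realType.
Variable n : nat.
Local Notation T := 'I_n.+1.
Local Notation c := (ord0 : T).
Local Notation st := (@star_adj n.+1).

Lemma wb0 (v : T) : walkball st v 0 = [set v].
Proof. by []. Qed.

Lemma wb1c : walkball st c 1 = finset.setT.
Proof.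
apply/setP => u; rewrite /= !inE.
case: (eqVneq u c) => [//|hu] /=.
apply/existsP; exists c; rewrite !inE eqxx /= /star_adj eq_sym hu /=.
by [].
Qed.

Lemma wb1l (v : T) : v != c -> walkball st v 1 = [set v; c].
Proof.
move=> hv; apply/setP => u; rewrite /= !inE.
case: (eqVneq u v) => [//|huv] /=.
apply/idP/idP.
  move/existsP => [w]; rewrite !inE => /andP [/eqP -> ] /andP [_].
  move: hv; rewrite -val_eqE /= => /negbTE -> /=.
  by move=> h; apply/eqP; apply: val_inj; apply/eqP.
move/eqP => ->; apply/existsP; exists v; rewrite !inE eqxx /= /star_adj.
by rewrite hv /= orbT.
Qed.

Lemma wb2 (v : T) : walkball st v 2 = finset.setT.
Proof.
have E : walkball st v 2 = walkball st v 1 :|: [set u | [exists w in walkball st v 1, st w u]] by [].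
apply/setP => u; rewrite E inE.
case: (eqVneq v c) => [->|hv].
  by rewrite wb1c !inE.
rewrite wb1l // !inE.
case: (eqVneq u v) => [//|huv] /=; case: (eqVneq u c) => [//|huc] /=.
apply/existsP; exists c; rewrite !inE eqxx orbT /= /star_adj eq_sym huc /=.
by [].
Qed.

Lemma wbge2 (v : T) k : (2 <= k)%N -> walkball st v k = finset.setT.
Proof.
move=> hk; apply/setP => u; rewrite inE.
apply: (fintype.subsetP (@wb_mono _ st v _ _ hk)).
by rewrite wb2 inE.
Qed.

Definition Aavg (f : T -> R) : R := (n.+1%:R)^-1 * \sum_(u : T) `|f u|.

Lemma avgT (f : T -> R) (v : T) k : walkball st v k = finset.setT -> avgW st f v k = Aavg f.
Proof.
move=> h; rewrite /avgW /Aavg h cardsT card_ord.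
by congr (_ * _); apply: eq_bigl => u; rewrite inE.
Qed.

Lemma avg0 (f : T -> R) (v : T) : avgW st f v 0 = `|f v|.
Proof. by rewrite /avgW wb0 cards1 big_set1 invr1 mul1r. Qed.

Lemma avg1l (f : T -> R) (v : T) : v != c -> avgW st f v 1 = (`|f v| + `|f c|) / 2.
Proof.
move=> hv; rewrite /avgW wb1l // cards2 hv.
have hvc : v \notin [set c] by rewrite inE.
rewrite (big_setU1 _ hvc).
by rewrite big_set1 mulrC.
Qed.

End Star2.
Section Star3.
Variable R : realType.
Variable n : nat.
Local Notation T := 'I_n.+1.
Local Notation c := (ord0 : T).
Local Notation st := (@star_adj n.+1).

Lemma maxfun_star (f : T -> R) (v : T) : maxfun st f v =
  Num.max (avgW st f v 0) (Num.max (avgW st f v 1) (avgW st f v 2)).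
Proof.
rewrite maxfun_eq.
set M := Num.max _ _.
set S := [set avgW st f v k | k in [set: nat]]%classic.
have ub : ubound S M.
  move=> x [k _ <-].
  case: k => [|[|k]].
  - by rewrite /M le_max lexx.
  - by rewrite /M !le_max lexx orbT.
  - rewrite (@avgT _ _ f v k.+2) ?wbge2 // -(@avgT _ _ f v 2) ?wb2 //.
    by rewrite /M !le_max lexx !orbT.
have ne : (S !=set0)%classic by exists (avgW st f v 0); exists 0%N.
have hs : has_sup S by split => //; exists M.
have memS : forall k, avgW st f v k <= sup S.
  by move=> k; apply: sup_upper_bound => //; exists k.
apply: le_anti; rewrite ge_sup //= /M !ge_max !memS.
by [].
Qed.

Lemma maxfun_center (f : T -> R) : maxfun st f c = Num.max `|f c| (Aavg f).
Proof.
rewrite maxfun_star avg0 (@avgT _ _ f c 1) ?wb1c // (@avgT _ _ f c 2) ?wb2 //.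
by rewrite maxxx.
Qed.

Lemma maxfun_leaf (f : T -> R) (v : T) : v != c ->
  maxfun st f v = Num.max `|f v| (Num.max ((`|f v| + `|f c|) / 2) (Aavg f)).
Proof.
move=> hv; by rewrite maxfun_star avg0 avg1l // (@avgT _ _ f v 2) ?wb2.
Qed.

End Star3.
Section Final.
Variable R : realType.

Lemma sum_pos (T : finType) (f : T -> R) (p : R) : 0 < p -> (exists v, f v != 0) ->
  0 < \sum_v `|f v| `^ p.
Proof.
move=> p0 [v hv]; rewrite (bigD1 v) //=.
have h1 : 0 < `|f v| `^ p by apply: powR_gt0; rewrite normr_gt0.
have h2 : 0 <= \sum_(i | i != v) `|f i| `^ p by apply: sumr_ge0 => i _; exact: powR_ge0.
lra.
Qed.

Lemma powR_inv_pow (K p : R) : 0 < p -> 0 <= K -> (K `^ p^-1) `^ p = K.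
Proof. by move=> p0 K0; rewrite -powRrM mulVf ?gt_eqF // powRr1. Qed.

Lemma sup_bounds (T : finType) (e : rel T) (p K K' : R) : 0 < p -> 0 < K' ->
  (forall f : T -> R, (exists v, f v != 0) ->
     \sum_v `|maxfun e f v| `^ p <= K * \sum_v `|f v| `^ p) ->
  (exists f : T -> R, (exists v, f v != 0) /\
     K' * \sum_v `|f v| `^ p <= \sum_v `|maxfun e f v| `^ p) ->
  K' <= maxop_norm e p `^ p /\ maxop_norm e p `^ p <= K.
Proof.
move=> p0 K'0 Hup [g [gnz Hlow]].
have ip0 : 0 <= p^-1 by rewrite invr_ge0; lra.
have Dg := sum_pos p0 gnz.
have KK : K' <= K.
  have := Hup g gnz => h.
  have : K' * \sum_v `|g v| `^ p <= K * \sum_v `|g v| `^ p by lra.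
  by rewrite ler_pM2r.
have K0 : 0 <= K by lra.
have ratio_up : forall f : T -> R, (exists v, f v != 0) ->
    lpnorm p (maxfun e f) / lpnorm p f <= K `^ p^-1.
  move=> f fnz; have Df := sum_pos p0 fnz.
  rewrite /lpnorm ler_pdivrMr ?powR_gt0 //.
  rewrite -powRM //; last by apply: sumr_ge0 => v _; exact: powR_ge0.
  apply: powR_mono => //; last exact: Hup.
  by apply: sumr_ge0 => v _; exact: powR_ge0.
have ratio_low : K' `^ p^-1 <= lpnorm p (maxfun e g) / lpnorm p g.
  rewrite /lpnorm ler_pdivlMr ?powR_gt0 //.
  rewrite -powRM //; last by apply: sumr_ge0 => v _; exact: powR_ge0.
  apply: powR_mono => //; first by rewrite mulr_ge0 //; [lra| apply: sumr_ge0 => v _; exact: powR_ge0].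
  lra.
set S := [set lpnorm p (maxfun e f) / lpnorm p f | f in [set f : T -> R | exists v, f v != 0]]%classic.
have ub : ubound S (K `^ p^-1) by move=> x [f fnz <-]; exact: ratio_up.
have gS : S (lpnorm p (maxfun e g) / lpnorm p g) by exists g.
have ne : (S !=set0)%classic by eexists; exact: gS.
have hs : has_sup S by split => //; exists (K `^ p^-1).
have s1 : maxop_norm e p <= K `^ p^-1 by rewrite /maxop_norm -/S; apply: ge_sup.
have s2 : K' `^ p^-1 <= maxop_norm e p.
  by rewrite /maxop_norm -/S; apply: (le_trans ratio_low); apply: sup_upper_bound.
have s0 : 0 <= K' `^ p^-1 by exact: powR_ge0.
split.
  rewrite -{1}(@powR_inv_pow K' p) //; last lra.
  by apply: powR_mono => //; lra.
rewrite -[X in _ <= X](@powR_inv_pow K p) //.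
apply: powR_mono => //; [exact: le_trans s2| lra].
Qed.

End Final.
Section Lower.
Variable R : realType.

Lemma lower_ex (n : nat) (p : R) : 0 < p ->
  exists f : 'I_n.+1 -> R, (exists v, f v != 0) /\
  (1 + Num.sqrt (n.+1%:R : R)) / 2 * \sum_v `|f v| `^ p <=
    \sum_v `|maxfun (@star_adj n.+1) f v| `^ p.
Proof.
move=> p0.
set w := Num.sqrt (n.+1%:R : R).
have w0 : 0 <= w by exact: sqrtr_ge0.
have wN : w ^+ 2 = n.+1%:R by rewrite /w sqr_sqrtr // ler0n.
set s := (w + 1)^-1.
have s0 : 0 < s by rewrite /s invr_gt0; lra.
set x := s `^ (2 / p).
have x0 : 0 <= x by exact: powR_ge0.
have hx : x `^ p = s ^+ 2.
  rewrite /x -powRrM -(@powR_mulrn _ s 2); last lra.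
  by congr (_ `^ _); field; lra.
have sx : (Num.sqrt x) `^ p = s.
  rewrite -powR12_sqrt // /x -!powRrM.
  have -> : 2 / p * (2^-1 * p) = 1 by field; lra.
  by rewrite powRr1; lra.
pose f := fun u : 'I_n.+1 => if u == ord0 then 1 else x.
have fl : forall i : 'I_n, f (lift ord0 i) = x.
  by move=> i; rewrite /f eq_sym (negbTE (neq_lift _ _)).
have fc : f ord0 = 1 by rewrite /f eqxx.
exists f; split; first by exists ord0; rewrite fc oner_neq0.
have D : \sum_v `|f v| `^ p = 1 + n%:R * s ^+ 2.
  rewrite big_ord_recl fc normr1 powR1.
  under eq_bigr => i _ do rewrite fl (ger0_norm x0) hx.
  by rewrite sumr_const card_ord mulr_natl.
have N : 1 + n%:R * s <= \sum_v `|maxfun (@star_adj n.+1) f v| `^ p.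
  rewrite big_ord_recl.
  have c1 : 1 <= `|maxfun (@star_adj n.+1) f ord0| `^ p.
    rewrite maxfun_center fc normr1.
    have h1 : 1 <= Num.max 1 (Aavg f) by rewrite le_max lexx.
    rewrite ger0_norm; last lra.
    have e1 : (1:R) `^ p = 1 by rewrite powR1.
    rewrite -[X in X <= _]e1.
    by apply: powR_mono => //; lra.
  have c2 : forall i : 'I_n, s <= `|maxfun (@star_adj n.+1) f (lift ord0 i)| `^ p.
    move=> i; rewrite maxfun_leaf; last by rewrite eq_sym neq_lift.
    rewrite fl fc normr1 (ger0_norm x0).
    have sq0 : 0 <= Num.sqrt x by exact: sqrtr_ge0.
    have sq2 : Num.sqrt x ^+ 2 = x by rewrite sqr_sqrtr.
    have amgm : Num.sqrt x <= (x + 1) / 2.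
      have := sqr_ge0 (Num.sqrt x - 1); rewrite expr2 in sq2; rewrite expr2; nra.
    have h1 : Num.sqrt x <= Num.max x (Num.max ((x + 1) / 2) (Aavg f)).
      by rewrite !le_max amgm orbT.
    rewrite ger0_norm; last lra.
    rewrite -sx; apply: powR_mono => //; lra.
  have c3 : n%:R * s <= \sum_(i < n) `|maxfun (@star_adj n.+1) f (lift ord0 i)| `^ p.
    have -> : n%:R * s = \sum_(i < n) s by rewrite sumr_const card_ord mulr_natl.
    by apply: ler_sum => i _; exact: c2.
  lra.
rewrite D.
apply: le_trans N.
have nw : n%:R = w ^+ 2 - 1 by rewrite wN -addn1 natrD addrK.
rewrite nw /s le_eqVlt; apply/orP; left; apply/eqP; field; lra.
Qed.

End Lower.
Unset Implicit Arguments.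
Local Open Scope classical_set_scope.
Local Open Scope ring_scope.

Theorem theorem3p6 (R : realType) (n : nat) (hn : (25 <= n)%N) :
  (maxop_norm (@star_adj n) (p : R)) `^ p @[p --> +oo]
    --> (1 + Num.sqrt (n%:R : R)) / 2.
Proof.
case: n hn => [//|n] hn.
set w := Num.sqrt (n.+1%:R : R).
have w0 : 0 <= w by exact: sqrtr_ge0.
have wN : w ^+ 2 = n.+1%:R by rewrite /w sqr_sqrtr // ler0n.
have Npos : 0 < n.+1%:R :> R by rewrite ltr0n.
apply/cvgrPdist_le => eps e0.
set ep := Num.min eps (1 / 2).
have ep0 : 0 < ep by rewrite /ep lt_min e0 /=; lra.
have ep1 : ep <= 1 / 2 by rewrite /ep ge_min lexx orbT.
have epe : ep <= eps by rewrite /ep ge_min lexx.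
have eta0 : 0 < ep / (2 * n.+1%:R) by rewrite divr_gt0 //; lra.
have eta1 : ep / (2 * n.+1%:R) <= 1.
  rewrite ler_pdivrMr; last lra.
  have : 1 <= n.+1%:R :> R by rewrite ler1n.
  lra.
have [p0 [p00 Hp0]] := @asym R _ eta0 eta1.
near=> p.
have hp : Num.max p0 1 <= p by near: p; apply: nbhs_pinfty_ge; rewrite num_real.
have pp0 : p0 <= p by move: hp; rewrite ge_max => /andP [].
have p1 : 1 <= p by move: hp; rewrite ge_max => /andP [].
have ppos : 0 < p by lra.
have K'0 : 0 < (1 + w) / 2 by lra.
have Hup : forall f : 'I_n.+1 -> R, (exists v, f v != 0) ->
    \sum_v `|maxfun (@star_adj n.+1) f v| `^ p <= ((1 + w) / 2 + ep) * \sum_v `|f v| `^ p.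
  move=> f _.
  have M := @main_ineq R n (fun u => `|f u|) p ep w hn p1 ep0 ep1 w0 wN
    (fun z z0 z1 => Hp0 p z pp0 z0 z1) (fun u => normr_ge0 (f u)).
  rewrite big_ord_recl maxfun_center ger0_norm; last by rewrite le_max normr_ge0.
  have E : \sum_(i < n) `|maxfun (@star_adj n.+1) f (lift ord0 i)| `^ p =
     \sum_(i < n) (Num.max `|f (lift ord0 i)|
        (Num.max ((`|f (lift ord0 i)| + `|f ord0|) / 2) (Aavg f))) `^ p.
    apply: eq_bigr => i _; rewrite maxfun_leaf; last by rewrite eq_sym neq_lift.
    by rewrite ger0_norm // le_max normr_ge0.
  rewrite E.
  exact: M.
have [lo up] := @sup_bounds R _ (@star_adj n.+1) p ((1 + w) / 2 + ep) ((1 + w) / 2)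
   ppos K'0 Hup (lower_ex n ppos).
rewrite /= ler_norml; apply/andP; split; lra.
Unshelve. all: by end_near.
Qed.
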